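(* For every three-qubit state $\rho_{ABC}$ (pure or mixed), at most two of the three numbers $S_{AB}, S_{AC}, S_{BC}$ exceed $1$; that is, at most two of the three two-qubit reduced states violate the three-settings CJWR linear steering inequality. Moreover, steering can be non-monogamous in this scenario: there exists a three-qubit state for which two of the reduced states violate the three-settings CJWR linear steering inequality (two of $S_{AB}, S_{AC}, S_{BC}$ exceed $1$).
   Context: For a two-qubit state $\rho$ let $T=[t_{kl}]$ with $t_{kl}=\mathrm{Tr}[\rho\,\sigma_k\otimes\sigma_l]$ ($k,l\in\{1,2,3\}$, $\sigma_k$ the Pauli matrices) be its correlation matrix and $S(\rho)=\mathrm{Tr}[T^{T}T]=\sum_{k,l}t_{kl}^2$. For a three-qubit state $\rho_{ABC}$, $\rho_{AB},\rho_{AC},\rho_{BC}$ denote its two-qubit reduced states and $S_{ij}=S(\rho_{ij})$. The three-settings CJWR linear steering inequality for a two-qubit state $\rho$ reads $F_3(\rho,\mu)=\frac{1}{\sqrt3}\left|\sum_{k=1}^{3}\langle A_k\otimes B_k\rangle\right|\le 1$, where $A_k=\hat a_k\cdot\vec\sigma$ with unit vectors $\hat a_k\in\mathbb R^3$, $B_k=\hat b_k\cdot\vec\sigma$ with orthonormal vectors $\hat b_k\in\mathbb R^3$, $\mu$ the set of these directions, and $\langle X\rangle=\mathrm{Tr}[\rho X]$. Its maximum over all measurement settings $\mu$ equals $\sqrt{S(\rho)}$, so $\rho$ violates the inequality (is ''$F_3$ steerable'') if and only if $S(\rho)>1$. *)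

(* Defs.v *)
From HB Require Import structures.
From mathcomp Require Import all_boot all_order all_algebra.
From mathcomp Require Import mxtens.
Set Implicit Arguments. Unset Strict Implicit. Unset Printing Implicit Defensive.
Import Order.TTheory GRing.Theory Num.Theory.
Local Open Scope ring_scope.

Section Qubits.
Variable C : numClosedFieldType.

Definition adjmx m n (A : 'M[C]_(m, n)) : 'M[C]_(n, m) :=
  \matrix_(i, j) (A j i)^*.

Definition is_density n (rho : 'M[C]_n) : Prop :=
  [/\ adjmx rho = rho,
      (forall v : 'cV[C]_n, 0 <= (adjmx v *m rho *m v) 0 0)
    & \tr rho = 1].

(* Pauli matrices sigma_1, sigma_2, sigma_3 (indexed by k = 0, 1, 2) *)
Definition pauli (k : 'I_3) : 'M[C]_2 :=
  \matrix_(a, b)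
    match val k with
    | 0 => if a == b then 0 else 1
    | 1 => if a == b then 0 else if val a == 0 then - 'i else 'i
    | _ => if a == b then (if val a == 0 then 1 else -1) else 0
    end.

Definition corr (rho : 'M[C]_(2 * 2)) (k l : 'I_3) : C :=
  \tr (rho *m (pauli k *t pauli l)).

(* S(rho) = Tr[T^T T] = sum_{k,l} t_kl^2 *)
Definition Sval (rho : 'M[C]_(2 * 2)) : C :=
  \sum_(k < 3) \sum_(l < 3) corr rho k l ^+ 2.

(* three-qubit basis index |a b c>, ordering A (x) B (x) C *)
Definition idx3 (a b c : 'I_2) : 'I_(2 * 2 * 2) :=
  mxtens_index (mxtens_index (a, b), c).

Definition fst2 (i : 'I_(2 * 2)) : 'I_2 := (mxtens_unindex i).1.
Definition snd2 (i : 'I_(2 * 2)) : 'I_2 := (mxtens_unindex i).2.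

Definition rhoAB (rho : 'M[C]_(2 * 2 * 2)) : 'M[C]_(2 * 2) :=
  \matrix_(i, j) \sum_(c < 2) rho (idx3 (fst2 i) (snd2 i) c) (idx3 (fst2 j) (snd2 j) c).
Definition rhoAC (rho : 'M[C]_(2 * 2 * 2)) : 'M[C]_(2 * 2) :=
  \matrix_(i, j) \sum_(b < 2) rho (idx3 (fst2 i) b (snd2 i)) (idx3 (fst2 j) b (snd2 j)).
Definition rhoBC (rho : 'M[C]_(2 * 2 * 2)) : 'M[C]_(2 * 2) :=
  \matrix_(i, j) \sum_(a < 2) rho (idx3 a (fst2 i) (snd2 i)) (idx3 a (fst2 j) (snd2 j)).

End Qubits.

(* Main.v *)
Require Import Defs.
From HB Require Import structures.
From mathcomp Require Import all_boot all_order all_algebra.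
From mathcomp Require Import mxtens sesquilinear spectral.
From mathcomp Require Import ring lra.
Set Implicit Arguments. Unset Strict Implicit. Unset Printing Implicit Defensive.
Import Order.TTheory GRing.Theory Num.Theory.
Local Open Scope ring_scope.
Section S.
Variable C : numClosedFieldType.

Lemma sum_tens m n (F : 'I_(m * n) -> C) :
  \sum_(i < m * n) F i = \sum_(a < m) \sum_(b < n) F (mxtens_index (a, b)).
Proof.
rewrite pair_big /=.
rewrite (reindex (@mxtens_index m n)) /=; last first.
  by exists (@mxtens_unindex m n) => x _; [rewrite mxtens_indexK | rewrite mxtens_unindexK].
by apply: eq_bigr => -[a b].
Qed.

Definition o0 : 'I_2 := @Ordinal 2 0 isT.
Definition o1 : 'I_2 := @Ordinal 2 1 isT.
Lemma sum_I2 (F : 'I_2 -> C) : \sum_(i < 2) F i = F o0 + F o1.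
Proof. rewrite big_ord_recl big_ord1; congr (F _ + F _); exact: val_inj. Qed.

Lemma fst2E (a b : 'I_2) : fst2 (mxtens_index (a, b)) = a.
Proof. by rewrite /fst2 mxtens_indexK. Qed.
Lemma snd2E (a b : 'I_2) : snd2 (mxtens_index (a, b)) = b.
Proof. by rewrite /snd2 mxtens_indexK. Qed.

Lemma corrE (r : 'M[C]_(2*2)) k l : corr r k l =
  \sum_(a < 2) \sum_(b < 2) \sum_(a' < 2) \sum_(b' < 2)
     r (mxtens_index (a, b)) (mxtens_index (a', b')) * (pauli C k a' a * pauli C l b' b).
Proof.
rewrite /corr /mxtrace sum_tens; apply: eq_bigr => a _; apply: eq_bigr => b _.
rewrite mxE sum_tens; apply: eq_bigr => a' _; apply: eq_bigr => b' _.
by rewrite tensmxE.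
Qed.

Definition t0 : 'I_3 := @Ordinal 3 0 isT.
Definition t1 : 'I_3 := @Ordinal 3 1 isT.
Definition t2 : 'I_3 := @Ordinal 3 2 isT.
Lemma sum_I3 (F : 'I_3 -> C) : \sum_(i < 3) F i = F t0 + F t1 + F t2.
Proof. rewrite !big_ord_recl big_ord0 addr0 addrA; congr (F _ + F _ + F _); exact: val_inj. Qed.

Definition q (k : 'I_3) (a b : 'I_2) : C :=
  match val k, val a, val b with
  | 0, 0, 1 | 0, 1, 0 => 1
  | 0, _, _ => 0
  | 1, 0, 1 => -1
  | 1, 1, 0 => 1
  | 1, _, _ => 0
  | _, 0, 0 => 1
  | _, 1, 1 => -1
  | _, _, _ => 0
  end.
Definition cc (k : 'I_3) : C := if val k == 1%N then 'i else 1.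
Definition ss (k : 'I_3) : C := if val k == 1%N then -1 else 1.

Lemma pauliE k a b : pauli C k a b = cc k * q k a b.
Proof.
rewrite mxE /cc /q.
case: k => [[|[|[|k]]] Hk] //=; case: a => [[|[|a]] Ha] //=; case: b => [[|[|b]] Hb] //=;
  rewrite ?mul1r ?mulr1 ?mulr0 ?mulrN1 //.
Qed.

Lemma cc2 k : cc k ^+ 2 = ss k.
Proof. by rewrite /cc /ss; case: eqP => _; rewrite ?sqrCi ?expr1n. Qed.

Lemma sqr_fact k l (E : C) : (cc k * cc l * E) ^+ 2 = ss k * ss l * E ^+ 2.
Proof. by rewrite !exprMn !cc2. Qed.

Lemma corrE2 (r : 'M[C]_(2*2)) k l : corr r k l = cc k * cc l *
  \sum_(a < 2) \sum_(b < 2) \sum_(a' < 2) \sum_(b' < 2)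
     r (mxtens_index (a, b)) (mxtens_index (a', b')) * (q k a' a * q l b' b).
Proof.
rewrite corrE mulr_sumr; apply: eq_bigr => a _; rewrite mulr_sumr; apply: eq_bigr => b _.
rewrite mulr_sumr; apply: eq_bigr => a' _; rewrite mulr_sumr; apply: eq_bigr => b' _.
rewrite !pauliE; ring.
Qed.

Definition EE (r : 'M[C]_(2*2)) k l :=
  \sum_(a < 2) \sum_(b < 2) \sum_(a' < 2) \sum_(b' < 2)
     r (mxtens_index (a, b)) (mxtens_index (a', b')) * (q k a' a * q l b' b).

Lemma SvalE (r : 'M[C]_(2*2)) : Sval r =
  \sum_(k < 3) \sum_(l < 3) ss k * ss l * EE r k l ^+ 2.
Proof.
apply: eq_bigr => k _; apply: eq_bigr => l _; by rewrite corrE2 sqr_fact.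
Qed.

Lemma key (rho : 'M[C]_(2*2*2)) (x y : 'I_2 -> 'I_2 -> 'I_2 -> C)
  (H : forall a b c a' b' c', rho (idx3 a b c) (idx3 a' b' c') = x a b c * y a' b' c') :
  Sval (rhoAB rho) + Sval (rhoAC rho) + Sval (rhoBC rho) =
  3 * (\sum_(a < 2) \sum_(b < 2) \sum_(c < 2) x a b c * y a b c) ^+ 2.
Proof.
rewrite !SvalE /EE !sum_I3 !sum_I2 !mxE !fst2E !snd2E !sum_I2 !H /ss /q /=.
ring.
Qed.
End S.

Section S2.
Variable C : numClosedFieldType.

Lemma jensen n (d u : 'I_n -> C) : (forall m, 0 <= d m) -> \sum_m d m = 1 ->
  (forall m, u m \is Num.real) ->
  (\sum_m d m * u m) ^+ 2 <= \sum_m d m * u m ^+ 2.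
Proof.
move=> d0 d1 ur; set U := \sum_m d m * u m.
have UR : U \is Num.real.
  by apply: rpred_sum => m _; apply: rpredM; [exact: ger0_real|exact: ur].
have H : 0 <= \sum_m d m * (u m - U) ^+ 2.
  apply: sumr_ge0 => m _; apply: mulr_ge0 => //; rewrite -realEsqr.
  by apply: rpredB.
have E : \sum_m d m * (u m - U) ^+ 2 =
   \sum_m d m * u m ^+ 2 - 2 * U * U + U ^+ 2 * \sum_m d m.
  rewrite (eq_bigr (fun m => (d m * u m ^+ 2 - 2 * U * (d m * u m)) + U ^+ 2 * d m)); last first.
    by move=> m _; ring.
  by rewrite big_split sumrB /= -!mulr_sumr.
rewrite -subr_ge0; move: H; rewrite E d1 mulr1.
suff -> : \sum_m d m * u m ^+ 2 - 2 * U * U + U ^+ 2 =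
         \sum_m d m * u m ^+ 2 - U ^+ 2 by [].
ring.
Qed.

Lemma pauli_herm k a b : (pauli C k a b)^* = pauli C k b a.
Proof.
rewrite !mxE.
case: k => [[|[|[|k]]] Hk] //=; case: a => [[|[|a]] Ha] //=; case: b => [[|[|b]] Hb] //=.
all: try by rewrite ?rmorph0 ?rmorph1.
all: try by rewrite -conjCi conjCK.
all: try by rewrite conjCi.
all: by rewrite rmorphN1.
Qed.

Lemma corr_real (r : 'M[C]_(2*2)) k l : (forall i j, (r i j)^* = r j i) ->
  corr r k l \is Num.real.
Proof.
move=> hr; apply/CrealP; rewrite corrE !sum_I2 !rmorphD !rmorphM /= !hr !pauli_herm.
ring.
Qed.

Lemma lin_corr n (r : 'M[C]_(2*2)) (rs : 'I_n -> 'M[C]_(2*2)) (dd : 'I_n -> C) :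
  r = \sum_m dd m *: rs m -> forall k l, corr r k l = \sum_m dd m * corr (rs m) k l.
Proof.
move=> -> k l; rewrite /corr mulmx_suml linear_sum /=.
by apply: eq_bigr => m _; rewrite -scalemxAl mxtraceZ.
Qed.

Lemma Sval_le n (dd : 'I_n -> C) (r : 'M[C]_(2*2)) (rs : 'I_n -> 'M[C]_(2*2)) :
  (forall m, 0 <= dd m) -> \sum_m dd m = 1 ->
  r = \sum_m dd m *: rs m -> (forall m i j, (rs m i j)^* = rs m j i) ->
  Sval r <= \sum_m dd m * Sval (rs m).
Proof.
move=> d0 d1 hr hh; rewrite /Sval.
under [X in _ <= X]eq_bigr do rewrite mulr_sumr.
rewrite [X in _ <= X]exchange_big /=; apply: ler_sum => k _.
under [X in _ <= X]eq_bigr do rewrite mulr_sumr.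
rewrite [X in _ <= X]exchange_big /=; apply: ler_sum => l _.
rewrite (lin_corr hr); apply: jensen => // m; exact: corr_real.
Qed.

End S2.

Section S3.
Variable C : numClosedFieldType.
Variable rho : 'M[C]_(2*2*2).
Hypothesis Hd : is_density rho.

Lemma rho_herm : rho \is hermsymmx.
Proof.
case: Hd => Ha _ _; apply/is_hermitianmxP; rewrite expr0 scale1r.
by apply/matrixP => i j; rewrite !mxE -{1}Ha mxE.
Qed.

Let P := spectralmx rho.
Let d m := spectral_diag rho 0 m.

Lemma PP m m' : \sum_i P m i * (P m' i)^* = (m == m')%:R.
Proof.
have /unitarymxP := spectral_unitarymx rho.
move/matrixP/(_ m m'); rewrite !mxE => <-.
by apply: eq_bigr => i _; rewrite !mxE.
Qed.

Lemma rho_dec i j : rho i j = \sum_m (P m i)^* * d m * P m j.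
Proof.
have /orthomx_spectralP E := hermitian_normalmx rho_herm.
rewrite {1}E invmx_unitary ?spectral_unitarymx // mul_mx_diag !mxE.
by apply: eq_bigr => m _; rewrite !mxE.
Qed.

Lemma d_ge0 m : 0 <= d m.
Proof.
case: Hd => _ Hp _.
have := Hp (\col_i (P m i)^*).
have -> : (adjmx (\col_i (P m i)^*) *m rho *m \col_i (P m i)^*) 0 0 =
  \sum_j \sum_i P m i * rho i j * (P m j)^*.
  rewrite mxE; apply: eq_bigr => j _; rewrite mxE big_distrl /=.
  by apply: eq_bigr => i _; rewrite !mxE conjCK.
rewrite exchange_big /=.
have -> : \sum_i \sum_j P m i * rho i j * (P m j)^* =
  \sum_k d k * (\sum_i P m i * (P k i)^*) * (\sum_j P k j * (P m j)^*).
  under eq_bigr => i _ do under eq_bigr => j _ do rewrite rho_dec big_distrr big_distrl /=.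
  under eq_bigr => i _ do rewrite exchange_big /=.
  rewrite exchange_big /=; apply: eq_bigr => k _.
  rewrite -mulrA big_distrl /= mulr_sumr; apply: eq_bigr => i _.
  rewrite !mulr_sumr; apply: eq_bigr => j _; ring.
suff -> : \sum_k d k * (\sum_i P m i * (P k i)^*) * (\sum_j P k j * (P m j)^*) = d m by [].
rewrite (bigD1 m) //= !PP eqxx !mulr1 big1 ?addr0 // => k hk.
by rewrite !PP eq_sym (negPf hk) !mulr0.
Qed.

Lemma d_sum : \sum_m d m = 1.
Proof.
case: Hd => _ _ Ht.
rewrite -Ht /mxtrace.
under [X in _ = X]eq_bigr do rewrite rho_dec.
rewrite exchange_big /=; apply: eq_bigr => m _.
have E : \sum_i P m i * (P m i)^* = 1 by rewrite PP eqxx.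
transitivity (d m * \sum_i P m i * (P m i)^*).
  by rewrite E mulr1.
rewrite mulr_sumr; apply: eq_bigr => i _; ring.
Qed.

Definition rm m : 'M[C]_(2*2*2) := \matrix_(i < 2*2*2, j < 2*2*2) ((P m i)^* * P m j).

Lemma rho_sum : rho = \sum_m d m *: rm m.
Proof.
apply/matrixP => i j; rewrite rho_dec summxE; apply: eq_bigr => m _.
rewrite !mxE; ring.
Qed.


Lemma linAB : rhoAB rho = \sum_m d m *: rhoAB (rm m).
Proof.
apply/matrixP => i j; rewrite summxE mxE.
under eq_bigr do rewrite rho_dec.
rewrite exchange_big /=; apply: eq_bigr => m _.
rewrite !mxE mulr_sumr; apply: eq_bigr => c _; rewrite !mxE; ring.
Qed.
Lemma linAC : rhoAC rho = \sum_m d m *: rhoAC (rm m).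
Proof.
apply/matrixP => i j; rewrite summxE mxE.
under eq_bigr do rewrite rho_dec.
rewrite exchange_big /=; apply: eq_bigr => m _.
rewrite !mxE mulr_sumr; apply: eq_bigr => c _; rewrite !mxE; ring.
Qed.
Lemma linBC : rhoBC rho = \sum_m d m *: rhoBC (rm m).
Proof.
apply/matrixP => i j; rewrite summxE mxE.
under eq_bigr do rewrite rho_dec.
rewrite exchange_big /=; apply: eq_bigr => m _.
rewrite !mxE mulr_sumr; apply: eq_bigr => c _; rewrite !mxE; ring.
Qed.

Lemma hermAB m i j : (rhoAB (rm m) i j)^* = rhoAB (rm m) j i.
Proof. rewrite !mxE rmorph_sum; apply: eq_bigr => c _; by rewrite !mxE rmorphM /= conjCK mulrC. Qed.
Lemma hermAC m i j : (rhoAC (rm m) i j)^* = rhoAC (rm m) j i.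
Proof. rewrite !mxE rmorph_sum; apply: eq_bigr => c _; by rewrite !mxE rmorphM /= conjCK mulrC. Qed.
Lemma hermBC m i j : (rhoBC (rm m) i j)^* = rhoBC (rm m) j i.
Proof. rewrite !mxE rmorph_sum; apply: eq_bigr => c _; by rewrite !mxE rmorphM /= conjCK mulrC. Qed.

Lemma sum8 (F : 'I_(2*2*2) -> C) :
  \sum_i F i = \sum_(a < 2) \sum_(b < 2) \sum_(c < 2) F (idx3 a b c).
Proof. by rewrite sum_tens (sum_tens (fun ab => \sum_(c < 2) F (mxtens_index (ab, c)))). Qed.

Lemma key_m m : Sval (rhoAB (rm m)) + Sval (rhoAC (rm m)) + Sval (rhoBC (rm m)) = 3.
Proof.
rewrite (@key _ _ (fun a b c => (P m (idx3 a b c))^*) (fun a b c => P m (idx3 a b c))); last first.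
  by move=> *; rewrite mxE.
rewrite -(sum8 (fun i => (P m i)^* * P m i)).
have -> : \sum_i (P m i)^* * P m i = 1.
  have E : \sum_i P m i * (P m i)^* = 1 by rewrite PP eqxx.
  rewrite -E; apply: eq_bigr => i _; by rewrite mulrC.
by rewrite expr1n mulr1.
Qed.

Lemma sum_le3 : Sval (rhoAB rho) + Sval (rhoAC rho) + Sval (rhoBC rho) <= 3.
Proof.
have h1 := Sval_le d_ge0 d_sum linAB hermAB.
have h2 := Sval_le d_ge0 d_sum linAC hermAC.
have h3 := Sval_le d_ge0 d_sum linBC hermBC.
apply: le_trans (lerD (lerD h1 h2) h3) _.
rewrite -!big_split /=.
rewrite (eq_bigr (fun m => d m * 3)); last first.
  by move=> m _; rewrite -!mulrDr key_m.
by rewrite -mulr_suml d_sum mul1r.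
Qed.

End S3.

Section S4.
Variable C : numClosedFieldType.

Definition nw (a b c : 'I_2) : nat :=
  match val a, val b, val c with
  | 1, 0, 0 => 4 | 0, 1, 0 => 4 | 0, 0, 1 => 7 | _, _, _ => 0 end.
Definition c0 : C := 9^-1.
Definition w a b c : C := (nw a b c)%:R * c0.
Definition psi (i : 'I_(2*2*2)) : C :=
  w (mxtens_unindex (mxtens_unindex i).1).1 (mxtens_unindex (mxtens_unindex i).1).2
    (mxtens_unindex i).2.
Lemma psiE a b c : psi (idx3 a b c) = w a b c.
Proof. by rewrite /psi /idx3 !mxtens_indexK. Qed.
Lemma c0_ge0 : 0 <= c0. Proof. by rewrite /c0 invr_ge0 ler0n. Qed.
Lemma psi_ge0 i : 0 <= psi i.
Proof. by rewrite /psi /w mulr_ge0 // ?ler0n // c0_ge0. Qed.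
Lemma psi_conj i : (psi i)^* = psi i.
Proof. exact/conj_Creal/ger0_real/psi_ge0. Qed.
Lemma c0E : 9 * c0 = 1. Proof. by rewrite /c0 mulfV // pnatr_eq0. Qed.

Definition rho0 : 'M[C]_(2*2*2) := \matrix_(i < 2*2*2, j < 2*2*2) (psi i * psi j).

Lemma rho0_density : is_density rho0.
Proof.
split.
- apply/matrixP => i j; rewrite !mxE rmorphM /= !psi_conj mulrC //.
- move=> v.
  have -> : (adjmx v *m rho0 *m v) 0 0 =
     (\sum_i psi i * v i 0)^* * (\sum_i psi i * v i 0).
    rewrite mxE big_distrr /=; apply: eq_bigr => j _.
    rewrite mxE rmorph_sum big_distrl big_distrl /=; apply: eq_bigr => i _.
    rewrite !mxE rmorphM /= psi_conj; ring.
  rewrite mulrC; exact: mul_conjC_ge0.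
- rewrite /mxtrace (sum8 (fun i => rho0 i i)).
  rewrite !sum_I2 !mxE !psiE /w /nw /=.
  transitivity ((9 * c0) ^+ 2); first ring.
  by rewrite c0E expr1n.
Qed.

Lemma SAC0 : Sval (rhoAC rho0) = 8673 * c0 ^+ 4.
Proof.
rewrite SvalE /EE !sum_I3 !sum_I2 !mxE !fst2E !snd2E !sum_I2 !mxE !psiE /ss /q /w /nw /=.
ring.
Qed.
Lemma SBC0 : Sval (rhoBC rho0) = 8673 * c0 ^+ 4.
Proof.
rewrite SvalE /EE !sum_I3 !sum_I2 !mxE !fst2E !snd2E !sum_I2 !mxE !psiE /ss /q /w /nw /=.
ring.
Qed.
Lemma gt1 : 1 < 8673 * c0 ^+ 4 :> C.
Proof.
rewrite /c0 exprVn -natrX ltr_pdivlMr ?ltr0n // mul1r ltr_nat //.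
Qed.
End S4.


Theorem theorem1 (C : numClosedFieldType) :
  (forall rho : 'M[C]_(2 * 2 * 2), is_density rho ->
     ~ [/\ 1 < Sval (rhoAB rho), 1 < Sval (rhoAC rho) & 1 < Sval (rhoBC rho)])
  /\
  (exists rho : 'M[C]_(2 * 2 * 2), is_density rho /\
     [|| (1 < Sval (rhoAB rho)) && (1 < Sval (rhoAC rho)),
         (1 < Sval (rhoAB rho)) && (1 < Sval (rhoBC rho))
       | (1 < Sval (rhoAC rho)) && (1 < Sval (rhoBC rho))]).
Proof.
split.
- move=> rho Hd [h1 h2 h3].
  have hle := sum_le3 Hd.
  have hlt := ltrD (ltrD h1 h2) h3.
  have e : (1 + 1 + 1 : C) = 3 by ring.
  rewrite e in hlt.
  by have := lt_le_trans hlt hle; rewrite ltxx.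
- exists (rho0 C); split; first exact: rho0_density.
  by rewrite SAC0 SBC0 gt1 !orbT.
Qed.
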